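(* Let $K$ be a field, $R$ a connected $\mathbb N$-graded $K$-algebra, and let $A$ be a graded trimmed right double Ore extension of $R$, with generators $x_1,x_2$, relation $x_2x_1=p_{12}x_1x_2+p_{11}x_1^2$ ($p_{12},p_{11}\in K$) and $x_ir=\sigma_{i1}(r)x_1+\sigma_{i2}(r)x_2$ for $r\in R$, $i=1,2$. Then $A$ is a graded quasi-commutative skew PBW extension of $R$ (in $x_1,x_2$) if and only if $p_{12}\ne0$, $p_{11}=0$, $\sigma_{11},\sigma_{22}$ are automorphisms of $R$, and $\sigma_{12}(r)=\sigma_{21}(r)=0$ for all $r\in R$.
   Context: A graded algebra is connected if its degree-zero part is $K$. A $K$-algebra $B\supseteq R$ is a right double Ore extension of $R$ if it is generated by $R$ and $x_1,x_2$; $x_2x_1=p_{12}x_1x_2+p_{11}x_1^2+\tau_1x_1+\tau_2x_2+\tau_0$ with $p_{12},p_{11}\in K$, $\tau_i\in R$; $B$ is a free left $R$-module with basis $\{x_1^ax_2^b\}$; $x_1R+x_2R\subseteq Rx_1+Rx_2+R$; write $x_ir=\sigma_{i1}(r)x_1+\sigma_{i2}(r)x_2+\delta_i(r)$. It is trimmed if $\delta_1=\delta_2=0$ and $\tau_0=\tau_1=\tau_2=0$; graded if all relations are homogeneous with $\deg x_1=\deg x_2=1$. A ring $A$ is a skew PBW extension of $R$ in $x_1,\dots,x_n$ if $R\subseteq A$; $A$ is a free left $R$-module on the monomials $x_1^{\alpha_1}\cdots x_n^{\alpha_n}$; for each $i$ and $r\ne0$ there is $c_{i,r}\in R\setminus\{0\}$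 with $x_ir-c_{i,r}x_i\in R$; for all $i,j$ there is $c_{i,j}\in R\setminus\{0\}$ with $x_jx_i-c_{i,j}x_ix_j\in R+Rx_1+\cdots+Rx_n$; then $x_ir=\sigma_i(r)x_i+\delta_i(r)$ with $\sigma_i$ an injective endomorphism. It is quasi-commutative if $x_ir=c_{i,r}x_i$ and $x_jx_i=c_{i,j}x_ix_j$; bijective if all $\sigma_i$ are bijective and $c_{i,j}$ invertible; graded if bijective, $R$ $\mathbb N$-graded, $\sigma_i$ graded, $\delta_i(R_m)\subseteq R_{m+1}$, and $x_jx_i-c_{i,j}x_ix_j\in R_2+R_1x_1+\cdots+R_1x_n$ with $c_{i,j}\in R_0$. *)

(* Defs.v *)
From HB Require Import structures.
From mathcomp Require Import all_boot all_order all_algebra.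
Set Implicit Arguments. Unset Strict Implicit. Unset Printing Implicit Defensive.
Import GRing.Theory.
Local Open Scope ring_scope.

Section Defs.
Variables (K : fieldType) (A : algType K).

Record subalgebra (R : {pred A}) : Prop := {
  sub1 : 1 \in R;
  subD : forall r s, r \in R -> s \in R -> r + s \in R;
  subN : forall r, r \in R -> - r \in R;
  subM : forall r s, r \in R -> s \in R -> r * s \in R;
  subZ : forall (k : K) r, r \in R -> k *: r \in R }.

Record connected_graded (R : {pred A}) (Rg : nat -> {pred A}) : Prop := {
  cg_sub : forall n r, r \in Rg n -> r \in R;
  cg_0 : forall n, 0 \in Rg n;
  cg_D : forall n r s, r \in Rg n -> s \in Rg n -> r + s \in Rg n;
  cg_Z : forall n (k : K) r, r \in Rg n -> k *: r \in Rg n;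
  cg_M : forall m n r s, r \in Rg m -> s \in Rg n -> r * s \in Rg (m + n);
  cg_1 : 1 \in Rg 0;
  cg_span : forall r, r \in R -> exists (N : nat) (f : nat -> A),
      (forall n, f n \in Rg n) /\ r = \sum_(n < N) f n;
  cg_direct : forall (N : nat) (f : nat -> A), (forall n, f n \in Rg n) ->
      \sum_(n < N) f n = 0 -> forall n, (n < N)%N -> f n = 0;
  cg_conn : forall r, r \in Rg 0%N -> exists k : K, r = k%:A }.

Definition mono (n : nat) (x : 'I_n -> A) (a : {ffun 'I_n -> nat}) : A :=
  \prod_(i < n) x i ^+ a i.

Definition left_monomial_basis (R : {pred A}) (n : nat) (x : 'I_n -> A) : Prop :=
  (forall f : A, exists (s : seq {ffun 'I_n -> nat}) (c : {ffun 'I_n -> nat} -> A),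
      (forall a, c a \in R) /\ f = \sum_(a <- s) c a * mono x a) /\
  (forall (s : seq {ffun 'I_n -> nat}) (c : {ffun 'I_n -> nat} -> A),
      uniq s -> (forall a, c a \in R) ->
      \sum_(a <- s) c a * mono x a = 0 -> forall a, a \in s -> c a = 0).

Definition in_lin (P0 P1 : {pred A}) (n : nat) (x : 'I_n -> A) (v : A) : Prop :=
  exists (r0 : A) (r : 'I_n -> A), r0 \in P0 /\ (forall k, r k \in P1) /\
    v = r0 + \sum_(k < n) r k * x k.

Record skew_PBW (R : {pred A}) (n : nat) (x : 'I_n -> A) : Prop := {
  spbw_basis : left_monomial_basis R x;
  spbw_ore : forall i r, r \in R -> r != 0 ->
      exists c, [/\ c \in R, c != 0 & x i * r - c * x i \in R];
  spbw_comm : forall i j, exists c, [/\ c \in R, c != 0 &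
      in_lin R R x (x j * x i - c * x i * x j)] }.

Record quasi_commutative (R : {pred A}) (n : nat) (x : 'I_n -> A) : Prop := {
  qc_ore : forall i r, r \in R -> r != 0 ->
      exists c, [/\ c \in R, c != 0 & x i * r = c * x i];
  qc_comm : forall i j, exists c, [/\ c \in R, c != 0 & x j * x i = c * x i * x j] }.

(** Graded skew PBW extension (which includes being bijective):
    sigma_i, delta_i are the maps with x_i r = sigma_i(r) x_i + delta_i(r). *)
Record graded_skew_PBW (R : {pred A}) (Rg : nat -> {pred A}) (n : nat)
    (x : 'I_n -> A) : Prop := {
  gs_skew : skew_PBW R x;
  gs_maps : exists sigma delta : 'I_n -> A -> A,
    [/\ forall i r, r \in R ->
          [/\ sigma i r \in R, delta i r \in R & x i * r = sigma i r * x i + delta i r],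
        forall i, {in R &, injective (sigma i)},
        forall i s, s \in R -> exists2 r, r \in R & sigma i r = s,
        forall i m r, r \in Rg m -> sigma i r \in Rg m &
        forall i m r, r \in Rg m -> delta i r \in Rg m.+1];
  gs_comm : forall i j, exists c, [/\ c \in Rg 0%N,
      (exists2 d, d \in R & c * d = 1 /\ d * c = 1) &
      in_lin (Rg 2%N) (Rg 1%N) x (x j * x i - c * x i * x j)] }.

Definition graded_qc_skew_PBW (R : {pred A}) (Rg : nat -> {pred A}) (n : nat)
    (x : 'I_n -> A) : Prop :=
  graded_skew_PBW R Rg x /\ quasi_commutative R x.

(** The two generators as a family indexed by 'I_2 (index 0 is x1, 1 is x2). *)
Definition pair_gen (x1 x2 : A) : 'I_2 -> A :=
  fun i => if val i == 0%N then x1 else x2.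

Record graded_trimmed_right_double_Ore (R : {pred A}) (Rg : nat -> {pred A})
    (x1 x2 : A) (p12 p11 : K) (s11 s12 s21 s22 : A -> A) : Prop := {
  dO_basis : left_monomial_basis R (pair_gen x1 x2);
  dO_rel : x2 * x1 = p12 *: (x1 * x2) + p11 *: (x1 * x1);
  dO_sR : forall r, r \in R ->
      [/\ s11 r \in R, s12 r \in R, s21 r \in R & s22 r \in R];
  dO_x1 : forall r, r \in R -> x1 * r = s11 r * x1 + s12 r * x2;
  dO_x2 : forall r, r \in R -> x2 * r = s21 r * x1 + s22 r * x2;
  dO_graded : forall m r, r \in Rg m ->
      [/\ s11 r \in Rg m, s12 r \in Rg m, s21 r \in Rg m & s22 r \in Rg m] }.

Record automorphism_on (R : {pred A}) (f : A -> A) : Prop := {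
  aut_R : forall r, r \in R -> f r \in R;
  aut_1 : f 1 = 1;
  aut_D : {in R &, forall r s, f (r + s) = f r + f s};
  aut_M : {in R &, forall r s, f (r * s) = f r * f s};
  aut_Z : forall (k : K), {in R, forall r, f (k *: r) = k *: f r};
  aut_inj : {in R &, injective f};
  aut_surj : forall s, s \in R -> exists2 r, r \in R & f r = s }.

End Defs.

(* Main.v *)
Require Import Defs.
From HB Require Import structures.
From mathcomp Require Import all_boot all_order all_algebra.
Import GRing.Theory.
Local Open Scope ring_scope.
Definition ex (a b : nat) : {ffun 'I_2 -> nat} :=
  [ffun i : 'I_2 => if val i == 0%N then a else b].

Lemma ex_neq a b c d : (a != c)%N || (b != d)%N -> ex a b != ex c d.
Proof.
move=> h; apply/eqP => e.
have e0 := congr1 (fun f : {ffun 'I_2 -> nat} => f ord0) e.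
have e1 := congr1 (fun f : {ffun 'I_2 -> nat} => f ord_max) e.
move: e0 e1 h; rewrite /ex !ffunE /= => -> ->.
by rewrite !eqxx.
Qed.

Lemma mono_ex (K : fieldType) (A : algType K) (x1 x2 : A) a b :
  mono (pair_gen x1 x2) (ex a b) = x1 ^+ a * x2 ^+ b.
Proof. by rewrite /mono !big_ord_recl big_ord0 /ex !ffunE /= mulr1. Qed.

Lemma basis5 (K : fieldType) (A : algType K) (R : {pred A}) (x1 x2 : A)
  r0 r1 r2 r3 r4 :
  left_monomial_basis R (pair_gen x1 x2) -> 0 \in R ->
  r0 \in R -> r1 \in R -> r2 \in R -> r3 \in R -> r4 \in R ->
  r0 + r1 * x1 + r2 * x2 + r3 * (x1 * x2) + r4 * (x1 * x1) = 0 ->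
  [/\ r0 = 0, r1 = 0, r2 = 0, r3 = 0 & r4 = 0].
Proof.
move=> [_ B] R0 H0 H1 H2 H3 H4 E.
pose s := [:: ex 0 0; ex 1 0; ex 0 1; ex 1 1; ex 2 0].
pose c := fun a => if a == ex 0 0 then r0 else if a == ex 1 0 then r1 else
   if a == ex 0 1 then r2 else if a == ex 1 1 then r3 else if a == ex 2 0 then r4 else 0.
have cR : forall a, c a \in R.
  by move=> a; rewrite /c; repeat case: ifP => _.
have us : uniq s.
  by rewrite /s /= !inE !negb_or !ex_neq.
have ne := ex_neq.
have Hs : \sum_(a <- s) c a * mono (pair_gen x1 x2) a = 0.
  rewrite /s !big_cons big_nil !mono_ex /c !eqxx /=.
  rewrite !(negbTE (ex_neq _ _ _ _ _)) //.
  rewrite expr0 !expr1 expr2 !mulr1 !mul1r addr0 -E.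
  by rewrite !addrA.
have := B s c us cR Hs.
move=> Z; split.
- by have := Z (ex 0 0); rewrite /c eqxx; apply; rewrite inE eqxx.
- by have := Z (ex 1 0); rewrite /c eqxx (negbTE (ex_neq _ _ _ _ _)) //; apply; rewrite !inE eqxx orbT.
- by have := Z (ex 0 1); rewrite /c eqxx !(negbTE (ex_neq _ _ _ _ _)) //; apply; rewrite !inE eqxx !orbT.
- by have := Z (ex 1 1); rewrite /c eqxx !(negbTE (ex_neq _ _ _ _ _)) //; apply; rewrite !inE eqxx !orbT.
- by have := Z (ex 2 0); rewrite /c eqxx !(negbTE (ex_neq _ _ _ _ _)) //; apply; rewrite !inE eqxx !orbT.
Qed.
Lemma zm1 (V : zmodType) (a b c d : V) : a + b = c + d -> b + (a - c) + (- d) = 0.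
Proof. by move=> h; rewrite addrA [b + a]addrC h addrAC addrK subrr. Qed.
Lemma zm2 (V : zmodType) (a b c d : V) : a + b = c + d -> b + (- c) + (a - d) = 0.
Proof. by move=> h; rewrite addrA [b - c + a]addrAC [b + a]addrC h [c + d]addrC addrK subrr. Qed.
Theorem theorem3p9 (K : fieldType) (A : algType K) (R : {pred A})
    (Rg : nat -> {pred A}) (x1 x2 : A) (p12 p11 : K)
    (s11 s12 s21 s22 : A -> A) :
  subalgebra R -> connected_graded R Rg ->
  graded_trimmed_right_double_Ore R Rg x1 x2 p12 p11 s11 s12 s21 s22 ->
  (graded_qc_skew_PBW R Rg (pair_gen x1 x2) <->
   [/\ p12 != 0, p11 = 0, automorphism_on R s11, automorphism_on R s22 &
       forall r, r \in R -> s12 r = 0 /\ s21 r = 0]).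
Proof.
move=> SA CG DO.
have R1 : 1 \in R := sub1 SA.
have RD := subD SA. have RN := subN SA. have RM := subM SA. have RZ := subZ SA.
have R0 : 0 \in R by rewrite -(subrr 1); apply: RD => //; apply: RN.
have RB : forall r s, r \in R -> s \in R -> r - s \in R.
  by move=> r s hr hs; apply: RD => //; apply: RN.
have B := dO_basis DO.
have B5 := fun r0 r1 r2 r3 r4 => @basis5 _ _ R x1 x2 r0 r1 r2 r3 r4 B R0.
have ealg : forall k : K, k%:A \in R by move=> k; apply: RZ.
split.
-
  move=> [[_ Hm _] [_ qcc]]; case: Hm => sigma [delta [Hsd Hinj Hsurj _ _]].
  have K1 : forall r, r \in R -> [/\ s11 r = sigma ord0 r, s12 r = 0 & x1 * r = s11 r * x1].
    move=> r hr; have [hs hd He] := Hsd ord0 r hr.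
    have [h11 h12 _ _] := dO_sR DO hr.
    have E : delta ord0 r + (sigma ord0 r - s11 r) * x1 + (- s12 r) * x2
       + 0 * (x1 * x2) + 0 * (x1 * x1) = 0.
      move: He => /= He.
      rewrite !mul0r !addr0 mulrBl mulNr.
      by apply: zm1; rewrite -He (dO_x1 DO hr).
    have [z0 z1 z2 _ _] := B5 _ _ _ _ _ hd (RB _ _ hs h11) (RN _ h12) R0 R0 E.
    split.
    + by apply/esym/eqP; rewrite -subr_eq0 z1.
    + by rewrite -[s12 r]opprK z2 oppr0.
    + by rewrite (dO_x1 DO hr) -[s12 r]opprK z2 oppr0 mul0r addr0.
  have K2 : forall r, r \in R -> [/\ s22 r = sigma ord_max r, s21 r = 0 & x2 * r = s22 r * x2].
    move=> r hr; have [hs hd He] := Hsd ord_max r hr.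
    have [_ _ h21 h22] := dO_sR DO hr.
    have E : delta ord_max r + (- s21 r) * x1 + (sigma ord_max r - s22 r) * x2
       + 0 * (x1 * x2) + 0 * (x1 * x1) = 0.
      move: He => /= He.
      rewrite !mul0r !addr0 mulrBl mulNr.
      by apply: zm2; rewrite -He (dO_x2 DO hr).
    have [z0 z1 z2 _ _] := B5 _ _ _ _ _ hd (RN _ h21) (RB _ _ hs h22) R0 R0 E.
    split.
    + by apply/esym/eqP; rewrite -subr_eq0 z2.
    + by rewrite -[s21 r]opprK z1 oppr0.
    + by rewrite (dO_x2 DO hr) -[s21 r]opprK z1 oppr0 mul0r add0r.
  have U1 : forall a b, a \in R -> b \in R -> a * x1 = b * x1 -> a = b.
    move=> a b ha hb e; apply/eqP; rewrite -subr_eq0; apply/eqP.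
    have E : 0 + (a - b) * x1 + 0 * x2 + 0 * (x1 * x2) + 0 * (x1 * x1) = 0.
      by rewrite !mul0r !addr0 add0r mulrBl e subrr.
    by have [_ z _ _ _] := B5 0 (a - b) 0 0 0 R0 (RB _ _ ha hb) R0 R0 R0 E.
  have U2 : forall a b, a \in R -> b \in R -> a * x2 = b * x2 -> a = b.
    move=> a b ha hb e; apply/eqP; rewrite -subr_eq0; apply/eqP.
    have E : 0 + 0 * x1 + (a - b) * x2 + 0 * (x1 * x2) + 0 * (x1 * x1) = 0.
      by rewrite !mul0r !addr0 add0r mulrBl e subrr.
    by have [_ _ z _ _] := B5 0 0 (a - b) 0 0 R0 R0 (RB _ _ ha hb) R0 R0 E.
  have AUT : forall (s t : A -> A) (x : A) (i : 'I_2),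
      (forall a b, a \in R -> b \in R -> a * x = b * x -> a = b) ->
      (forall r, r \in R -> s r \in R) ->
      (forall r, r \in R -> s r = sigma i r /\ x * r = s r * x) ->
      automorphism_on R s.
    move=> s t x i U sR Hs; split => //.
    + apply: U; rewrite ?sR //; have [_ <-] := Hs 1 R1; by rewrite mulr1 mul1r.
    + move=> r q hr hq; apply: U; [by rewrite sR ?RD | by apply: RD; apply: sR | ].
      have [_ <-] := Hs _ (RD _ _ hr hq).
      by rewrite mulrDr mulrDl (proj2 (Hs _ hr)) (proj2 (Hs _ hq)).
    + move=> r q hr hq; apply: U; [by rewrite sR ?RM | by apply: RM; apply: sR | ].
      have [_ <-] := Hs _ (RM _ _ hr hq).
      by rewrite mulrA (proj2 (Hs _ hr)) -mulrA (proj2 (Hs _ hq)) mulrA.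
    + move=> k r hr; apply: U; [by rewrite sR ?RZ | by apply: RZ; apply: sR | ].
      have [_ <-] := Hs _ (RZ k _ hr).
      by rewrite -scalerAr (proj2 (Hs _ hr)) scalerAl.
    + move=> r q hr hq e; apply: (Hinj i) => //.
      by rewrite -(proj1 (Hs _ hr)) -(proj1 (Hs _ hq)).
    + move=> q hq; have [r hr e] := Hsurj i q hq; exists r => //.
      by rewrite (proj1 (Hs _ hr)).
  have sR11 : forall r, r \in R -> s11 r \in R by move=> r hr; case: (dO_sR DO hr).
  have sR22 : forall r, r \in R -> s22 r \in R by move=> r hr; case: (dO_sR DO hr).
  have [c [cR cn0 cE]] := qcc ord0 ord_max.
  move: cE; rewrite /= (dO_rel DO) => cE.
  have E : 0 + 0 * x1 + 0 * x2 + (p12%:A - c) * (x1 * x2) + p11%:A * (x1 * x1) = 0.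
    rewrite !mul0r !addr0 add0r !mulr_algl mulrBl scalerAl.
    by rewrite mulr_algl -scalerAl addrAC cE -mulrA subrr.
  have [_ _ _ z3 z4] := B5 _ _ _ _ _ R0 R0 R0 (RB _ _ (ealg p12) cR) (ealg p11) E.
  have cp : c = p12%:A by apply/esym/eqP; rewrite -subr_eq0 z3.
  split.
  + by apply: contra cn0; rewrite cp => /eqP ->; rewrite scale0r.
  + by apply/eqP; move/eqP: z4; rewrite scaler_eq0 oner_eq0 orbF.
  + apply: (AUT s11 s11 x1 ord0 U1 sR11) => r hr; by have [? ? ?] := K1 r hr.
  + apply: (AUT s22 s22 x2 ord_max U2 sR22) => r hr; by have [? ? ?] := K2 r hr.
  + by move=> r hr; have [_ ? _] := K1 r hr; have [_ ? _] := K2 r hr.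
- move=> [p12n0 p11_0 A11 A22 Z].
  have X1 : forall r, r \in R -> x1 * r = s11 r * x1.
    by move=> r hr; rewrite (dO_x1 DO hr) (proj1 (Z r hr)) mul0r addr0.
  have X2 : forall r, r \in R -> x2 * r = s22 r * x2.
    by move=> r hr; rewrite (dO_x2 DO hr) (proj2 (Z r hr)) mul0r add0r.
  have rel : x2 * x1 = p12%:A * x1 * x2.
    by rewrite (dO_rel DO) p11_0 scale0r addr0 -mulrA mulr_algl.
  have rel' : x1 * x2 = p12^-1%:A * x2 * x1.
    by rewrite -mulrA rel -!mulrA !mulr_algl scalerA mulVf // scale1r.
  have s0 : forall s, automorphism_on R s -> s 0 = 0.
    move=> s Hs; have e := aut_D Hs R0 R0; rewrite addr0 in e.
    by apply: (addrI (s 0)); rewrite addr0 -e.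
  have sn0 : forall s r, automorphism_on R s -> r \in R -> r != 0 -> s r != 0.
    move=> s r Hs hr; apply: contra => /eqP e; apply/eqP.
    by apply: (aut_inj Hs) => //; rewrite e s0.
  pose sigma := fun i : 'I_2 => if val i == 0%N then s11 else s22.
  have Xi : forall i r, r \in R ->
      pair_gen x1 x2 i * r = sigma i r * pair_gen x1 x2 i.
    by move=> [[|[|//]] Hi] r hr; rewrite /pair_gen /sigma /=; [apply: X1 | apply: X2].
  have sigA : forall i, automorphism_on R (sigma i).
    by move=> [[|[|//]] Hi]; rewrite /sigma /=.
  have sigR : forall i r, r \in R -> sigma i r \in R.
    by move=> i r hr; apply: (aut_R (sigA i)).
  have one0 : (1 : A) \in Rg 0%N := cg_1 CG.
  have CM : forall i j, exists c, [/\ c \in Rg 0%N, c \in R, c != 0,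
      (exists2 d, d \in R & c * d = 1 /\ d * c = 1) &
      pair_gen x1 x2 j * pair_gen x1 x2 i = c * pair_gen x1 x2 i * pair_gen x1 x2 j].
    have inv : forall k : K, k != 0 -> exists c, [/\ c \in Rg 0%N, c \in R, c != 0,
      (exists2 d, d \in R & c * d = 1 /\ d * c = 1) & c = k%:A].
      move=> k kn0; exists k%:A; split => //.
      + exact: (cg_Z CG).
      + by rewrite scaler_eq0 negb_or kn0 oner_neq0.
      + exists k^-1%:A => //.
        by rewrite !mulr_algl !scalerA mulfV // mulVf // scale1r.
    move=> [[|[|//]] Hi] [[|[|//]] Hj]; rewrite /pair_gen /=.
      by exists 1; split => //; [exact: oner_neq0 | exists 1 => //; rewrite mulr1 | rewrite mul1r].
    + have [c [? ? ? ? ce]] := inv _ p12n0.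
      by exists c; split => //; rewrite ce rel.
    + have [c [? ? ? ? ce]] := inv _ (invr_neq0 p12n0).
      by exists c; split => //; rewrite ce rel'.
    + by exists 1; split => //; [exact: oner_neq0 | exists 1 => //; rewrite mulr1 | rewrite mul1r].
  split.
  + split.
    * split; first exact: (dO_basis DO).
      - move=> i r hr rn0; exists (sigma i r); split; first exact: sigR.
          exact: sn0.
        by rewrite Xi // subrr.
      - move=> i j; have [c [_ cR cn0 _ ce]] := CM i j; exists c; split => //.
        rewrite ce subrr; exists 0, (fun _ => 0); split => //.
        by rewrite big1 ?add0r // => k _; rewrite mul0r.
    * exists sigma, (fun _ _ => 0); split.
      - move=> i r hr; split; [exact: sigR | exact: R0 | by rewrite addr0 Xi].
      - by move=> i; apply: (aut_inj (sigA i)).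
      - by move=> i; apply: (aut_surj (sigA i)).
      - by move=> [[|[|//]] Hi] m r hr; rewrite /sigma /=; case: (dO_graded DO hr).
      - by move=> _ m _ _; apply: (cg_0 CG).
    * move=> i j; have [c [c0 cR cn0 cd ce]] := CM i j; exists c; split => //.
      rewrite ce subrr; exists 0, (fun _ => 0); split; [exact: (cg_0 CG) | split; [move=> _; exact: (cg_0 CG) |]].
      by rewrite big1 ?add0r // => k _; rewrite mul0r.
  + split.
    * move=> i r hr rn0; exists (sigma i r); split; [exact: sigR | exact: sn0 | exact: Xi].
    * by move=> i j; have [c [_ cR cn0 _ ce]] := CM i j; exists c; split.
Qed.
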